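(* Let $G$ be an abelian group and $\mathbf{z}_0,\dots,\mathbf{z}_t\in G$, with $\mathbf{z}_0$ of finite order $s$. Suppose there are integers $r_0,\dots,r_t$ with $r_n\mathbf{z}_{n+1}=r_{n+1}\mathbf{z}_n$ and $\gcd(r_n,r_{n+1})=1$ for $0\le n\le t-1$. Then for each $1\le n\le t$, the order of $\mathbf{z}_n$ divides $\operatorname{lcm}\{s r_0, r_1,\dots,r_{n-1}\}$. *)

(* Defs.v *)
From mathcomp Require Import all_boot all_order all_algebra.
Set Implicit Arguments. Unset Strict Implicit. Unset Printing Implicit Defensive.
Import Order.TTheory GRing.Theory Num.Theory.
Local Open Scope ring_scope.

(* For x of finite order this is the usual order (least positive m with m x = 0);
   for x of infinite order it is 0. *)
Definition order_of (G : zmodType) (x : G) (o : nat) : Prop :=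
  forall m : int, x *~ m = 0 <-> (o%:Z %| m)%Z.

Definition lcmz_seq (s : seq int) : int := foldr lcmz 1 s.

(* Main.v *)
Require Import Defs.
From mathcomp Require Import all_boot all_order all_algebra.
From Stdlib Require Import Classical.
From mathcomp Require Import zify ring.
Import Order.TTheory GRing.Theory Num.Theory.
Local Open Scope ring_scope.

Lemma mulrz_abs0 (G : zmodType) (x : G) (m : int) : x *~ m = 0 -> x *+ `|m|%N = 0.
Proof.
case: m => n /=; first by [].
by rewrite NegzE mulrNz => /eqP; rewrite oppr_eq0 => /eqP.
Qed.

Lemma order_exists (G : zmodType) (x : G) : exists o, order_of x o.
Proof.
case: (classic (exists m : nat, (0 < m)%N /\ x *+ m = 0)) => [ex|nex].
- have ex' : exists m, [pred m : nat | (0 < m)%N && (x *+ m == 0)] m.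
    by case: ex => m [h1 h2]; exists m; rewrite /= h1 h2 eqxx.
  case: (ex_minnP ex') => o /= /andP [o0 /eqP xo] omin.
  exists o => m; split.
  + move=> xm.
    have hmod : x *~ (m %% o)%Z = 0.
      rewrite (divz_eq m o) mulrzDr mulrzA mulrzAC -pmulrn xo mul0rz add0r in xm.
      by [].
    have o0' : (o%:Z != 0) by rewrite eqz_nat -lt0n.
    have hge := modz_ge0 m o0'.
    have hlt : ((m %% o)%Z < o%:Z) by rewrite ltz_pmod // ltz_nat.
    apply/dvdz_mod0P.
    move: hmod hge hlt; case: (m %% o)%Z => [k|k] hmod hge hk; last by []; clear hge.
    move/mulrz_abs0: hmod => /= hmod.
    case: k hk hmod => // k hk hmod.
    have := omin k.+1; rewrite /= hmod eqxx /= => /(_ isT).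
    by rewrite leqNgt -ltz_nat hk.
  + case/dvdzP => c ->.
    by rewrite mulrzA mulrzAC -pmulrn xo mul0rz.
- exists 0%N => m; split.
  + move=> xm; rewrite dvd0z; apply/negPn/negP => m0.
    apply: nex; exists `|m|%N; split; last exact: mulrz_abs0.
    by rewrite absz_gt0.
  + by rewrite dvd0z => /eqP ->.
Qed.

Lemma lcmz_dvd (a b c : int) : (a %| c)%Z -> (b %| c)%Z -> (lcmz a b %| c)%Z.
Proof.
rewrite /dvdz /lcmz => ha hb.
move: ha hb; rewrite /in_mem /= => ha hb. by rewrite dvdn_lcm ha hb.
Qed.

Lemma lcmz_seq_mem (l : seq int) x : x \in l -> (x %| lcmz_seq l)%Z.
Proof.
elim: l => // y l IH; rewrite inE => /orP [/eqP ->|xl] /=.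
  exact: dvdz_lcml.
exact: dvdz_trans (IH xl) (dvdz_lcmr _ _).
Qed.

Lemma lcmz_seq_dvd (l : seq int) c :
  (forall x, x \in l -> (x %| c)%Z) -> (lcmz_seq l %| c)%Z.
Proof.
elim: l => [|y l IH] h /=; first exact: dvd1z.
apply: lcmz_dvd; first by apply: h; rewrite inE eqxx.
by apply: IH => x xl; apply: h; rewrite inE xl orbT.
Qed.

Definition Lseq (s : nat) (r : nat -> int) (m : nat) : int :=
  lcmz_seq ((s%:Z * r 0%N) :: [seq r i | i <- iota 1 m]).

Lemma Lseq_mono s r m : (Lseq s r m %| Lseq s r m.+1)%Z.
Proof.
apply: lcmz_seq_dvd => x xl; apply: lcmz_seq_mem.
rewrite in_cons in xl; case/orP: xl => [hx|xl]; rewrite in_cons; first by rewrite hx. apply/orP; right.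
move/mapP: xl => [i hi ->]; apply/mapP; exists i => //.
move: hi; rewrite !mem_iota; lia.
Qed.

Lemma Lseq_r s r m : (r m.+1 %| Lseq s r m.+1)%Z.
Proof.
apply: lcmz_seq_mem; rewrite in_cons; apply/orP; right.
apply/mapP; exists m.+1 => //.
rewrite mem_iota; lia.
Qed.

Lemma step (G : zmodType) (z : nat -> G) (s : nat) (r : nat -> int) m K
  (hrel : z m.+1 *~ r m = z m *~ r m.+1)
  (hgcd : gcdz (r m) (r m.+1) = 1)
  (hK : z m *~ K = 0) (hd : (K * r m %| Lseq s r m)%Z) :
  exists K', [/\ z m.+1 *~ K' = 0, (K' %| Lseq s r m)%Z &
                (K' * r m.+1 %| Lseq s r m.+1)%Z].
Proof.
set a := r m in hrel hgcd hd *; set b := r m.+1 in hrel hgcd *.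
have hb : (b %| Lseq s r m.+1)%Z by exact: Lseq_r.
have hL := Lseq_mono s r m.
have [hK0|hKn0] := boolP ((K == 0) && (b == 0)).
  case/andP: hK0 => /eqP hK0 /eqP hb0.
  exists 0; split; first by rewrite mulr0z.
    by move: hd; rewrite hK0 mul0r.
  rewrite mul0r; apply: dvdz_trans hL; by move: hd; rewrite hK0 mul0r.
set g : nat := gcdn `|K| `|b|.
set h : int := g%:Z.
have hdef : gcdz K b = h by [].
have hh0 : h != 0 by rewrite -hdef gcdz_eq0.
have g0 : g != 0%N by rewrite -eqz_nat.
have hhK : (h %| K)%Z by rewrite -hdef; apply: dvdz_gcdl.
have hhb : (h %| b)%Z by rewrite -hdef; apply: dvdz_gcdr.
set k := (K %/ h)%Z; set q := (b %/ h)%Z.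
have eK : K = k * h by rewrite divzK.
have eb : b = q * h by rewrite divzK.
exists (k * a); split.
- have -> : k * a = a * k by rewrite mulrC.
  rewrite mulrzA hrel -mulrzA.
  have -> : b * k = K * q by rewrite eb eK; ring.
  by rewrite mulrzA hK mul0rz.
- apply: dvdz_trans hd; rewrite eK -mulrA (mulrC h) mulrA.
  exact: dvdz_mulr (dvdzz _).
- set X := Lseq s r m.+1.
  have hhX : (h %| X)%Z by apply: dvdz_trans hhb hb.
  have eX : X = (X %/ h)%Z * h by rewrite divzK.
  have hkq : coprimez k q.
    have := mulz_gcdl k q h; rewrite -eK -eb hdef /= => /eqP.
    rewrite -[X in _ == X]mul1r (inj_eq (mulIf hh0)).
    by [].
  have haq : coprimez a q.
    have : coprimez a b by rewrite /coprimez hgcd.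
    by rewrite eb coprimezMr => /andP [].
  rewrite eX eb mulrA (dvdz_mul2r hh0).
  rewrite Gauss_dvdz; last by rewrite coprimezMl hkq haq.
  apply/andP; split.
    rewrite -(dvdz_mul2r hh0) -eX -mulrA (mulrC a) mulrA -eK.
    exact: dvdz_trans hd hL.
  by rewrite -(dvdz_mul2r hh0) -eX -eb.
Qed.

Theorem lemma3p3 (G : zmodType) (t : nat) (z : nat -> G) (s : nat) (r : nat -> int)
  (hs : (0 < s)%N) (hz0 : order_of (z 0%N) s)
  (hrel : forall n : nat, (n < t)%N -> z n.+1 *~ r n = z n *~ r n.+1)
  (hgcd : forall n : nat, (n < t)%N -> gcdz (r n) (r n.+1) = 1) :
  forall n : nat, (1 <= n <= t)%N ->
    exists o : nat, order_of (z n) o /\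
      (o%:Z %| lcmz_seq ((s%:Z * r 0%N) :: [seq r i | i <- iota 1 n.-1]))%Z.
Proof.
have inv : forall m, (m <= t)%N -> exists K, z m *~ K = 0 /\ (K * r m %| Lseq s r m)%Z.
  elim=> [|m IH] hm.
    exists s%:Z; split; first by apply/hz0; exact: dvdzz.
    exact: dvdz_lcml.
  have hmt : (m < t)%N by [].
  case: (IH (ltnW hmt)) => K [hK hd].
  case: (@step _ z s r m _ (hrel m hmt) (hgcd m hmt) hK hd) => K' [h1 h2 h3].
  by exists K'.
case=> [|m] // /andP [_ hm].
case: (inv m (ltnW hm)) => K [hK hd].
case: (@step _ z s r m _ (hrel m hm) (hgcd m hm) hK hd) => K' [h1 h2 h3].
case: (@order_exists _ (z m.+1)) => o ho.
exists o; split => //.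
apply: dvdz_trans h2; exact/ho.
Qed.
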